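(* Let $\mathfrak{n}$ be a real nilpotent Lie algebra with a bi-invariant complex structure $J$. If there exists an inner product on $\mathfrak{n}$ that is Hermitian with respect to $J$ and pluriclosed, then $\mathfrak{n}$ is abelian.
   Context: A complex structure on a real Lie algebra $\mathfrak{g}$ is a linear map $J$ with $J^2=-I$ and $N_J(x,y)=[x,y]+J([Jx,y]+[x,Jy])-[Jx,Jy]=0$ for all $x,y$; it is bi-invariant if $J[x,y]=[x,Jy]$ for all $x,y$. An inner product $\langle\cdot,\cdot\rangle$ is Hermitian if $\langle Jx,Jy\rangle=\langle x,y\rangle$. Its torsion 3-form is $c(x,y,z)=-\langle[Jx,Jy],z\rangle-\langle[Jy,Jz],x\rangle-\langle[Jz,Jx],y\rangle$, and $\langle\cdot,\cdot\rangle$ is pluriclosed if $dc=0$, where $d$ is the Chevalley–Eilenberg differential on $\Lambda^*\mathfrak{g}^*$. *)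

(* Defs.v *)
From HB Require Import structures.
From mathcomp Require Import all_boot all_order all_algebra.
From mathcomp Require Export reals.
Set Implicit Arguments. Unset Strict Implicit. Unset Printing Implicit Defensive.
Import Order.TTheory GRing.Theory Num.Theory.
Local Open Scope ring_scope.

Section LieDefs.
Variables (R : realType) (n : nat).
Notation V := 'rV[R]_n.

Definition is_lie_bracket (br : V -> V -> V) : Prop :=
  [/\ (forall (a : R) (x y z : V), br (a *: x + y) z = a *: br x z + br y z),
      (forall (a : R) (x y z : V), br z (a *: x + y) = a *: br z x + br z y),
      (forall x : V, br x x = 0) &
      (forall x y z : V, br x (br y z) + br y (br z x) + br z (br x y) = 0)].

(* Lower central series: lcs 0 = g, lcs (k+1) = span [g, lcs k]. *)
Inductive lcs (br : V -> V -> V) : nat -> V -> Prop :=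
| lcs_base x : lcs br 0 x
| lcs_br k x y : lcs br k y -> lcs br k.+1 (br x y)
| lcs_zero k : lcs br k.+1 0
| lcs_add k u v : lcs br k.+1 u -> lcs br k.+1 v -> lcs br k.+1 (u + v)
| lcs_scale k (a : R) u : lcs br k.+1 u -> lcs br k.+1 (a *: u).

Definition nilpotent (br : V -> V -> V) : Prop :=
  exists k, forall x, lcs br k x -> x = 0.

Definition abelian (br : V -> V -> V) : Prop := forall x y, br x y = 0.

Definition linear_map (J : V -> V) : Prop :=
  forall (a : R) (x y : V), J (a *: x + y) = a *: J x + J y.

Definition nijenhuis (br : V -> V -> V) (J : V -> V) (x y : V) : V :=
  br x y + J (br (J x) y + br x (J y)) - br (J x) (J y).

Definition complex_structure (br : V -> V -> V) (J : V -> V) : Prop :=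
  [/\ linear_map J, (forall x, J (J x) = - x) &
      (forall x y, nijenhuis br J x y = 0)].

Definition bi_invariant (br : V -> V -> V) (J : V -> V) : Prop :=
  forall x y, J (br x y) = br x (J y).

Definition inner_product (ip : V -> V -> R) : Prop :=
  [/\ (forall (a : R) (x y z : V), ip (a *: x + y) z = a * ip x z + ip y z),
      (forall x y, ip x y = ip y x) &
      (forall x, x != 0 -> 0 < ip x x)].

Definition J_hermitian (J : V -> V) (ip : V -> V -> R) : Prop :=
  forall x y, ip (J x) (J y) = ip x y.

Definition torsion (br : V -> V -> V) (J : V -> V) (ip : V -> V -> R)
  (x y z : V) : R :=
  - ip (br (J x) (J y)) z - ip (br (J y) (J z)) x - ip (br (J z) (J x)) y.

(* Chevalley–Eilenberg differential of a 3-form (trivial coefficients):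
   (dc)(x0,..,x3) = sum_{i<j} (-1)^(i+j) c([xi,xj], x0,..^i..^j..,x3). *)
Definition ce_d3 (br : V -> V -> V) (c : V -> V -> V -> R)
  (x0 x1 x2 x3 : V) : R :=
  - c (br x0 x1) x2 x3 + c (br x0 x2) x1 x3 - c (br x0 x3) x1 x2
  - c (br x1 x2) x0 x3 + c (br x1 x3) x0 x2 - c (br x2 x3) x0 x1.

Definition pluriclosed (br : V -> V -> V) (J : V -> V) (ip : V -> V -> R)
  : Prop :=
  forall x0 x1 x2 x3, ce_d3 br (torsion br J ip) x0 x1 x2 x3 = 0.

End LieDefs.

(* Main.v *)
Require Import Defs.
From mathcomp Require Import all_boot all_order all_algebra.
From mathcomp Require Import ring lra.
Import Order.TTheory GRing.Theory Num.Theory.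
Local Open Scope ring_scope.

Lemma dbl0 (V : zmodType) (v : V) : v = v + v -> v = 0.
Proof. by move=> h; rewrite -[LHS](addrK v v) -h subrr. Qed.

Section Aux.
Variables (R : realType) (n : nat).
Variables (br : 'rV[R]_n -> 'rV[R]_n -> 'rV[R]_n) (J : 'rV[R]_n -> 'rV[R]_n)
  (ip : 'rV[R]_n -> 'rV[R]_n -> R).
Hypothesis (Hbr : is_lie_bracket br) (HJ : complex_structure br J)
  (Hbi : bi_invariant br J) (Hip : inner_product ip) (Hh : J_hermitian J ip).

Lemma brD1 x y z : br (x + y) z = br x z + br y z.
Proof. by case: Hbr => L _ _ _; have := L 1 x y z; rewrite !scale1r. Qed.
Lemma brD2 x y z : br z (x + y) = br z x + br z y.
Proof. by case: Hbr => _ L _ _; have := L 1 x y z; rewrite !scale1r. Qed.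
Lemma br0l z : br 0 z = 0.
Proof. by have := brD1 0 0 z; rewrite addr0 => /dbl0. Qed.
Lemma br0r z : br z 0 = 0.
Proof. by have := brD2 0 0 z; rewrite addr0 => /dbl0. Qed.
Lemma brNl x z : br (- x) z = - br x z.
Proof. by case: Hbr => L _ _ _; have := L (-1) x 0 z; rewrite addr0 br0l addr0 !scaleN1r. Qed.
Lemma brNr x z : br z (- x) = - br z x.
Proof. by case: Hbr => _ L _ _; have := L (-1) x 0 z; rewrite addr0 br0r addr0 !scaleN1r. Qed.
Lemma brA x y : br x y = - br y x.
Proof.
case: Hbr => _ _ A _; have := A (x + y).
rewrite brD1 !brD2 !A add0r addr0 => /eqP; rewrite addr_eq0 => /eqP //.
Qed.
Lemma brxx x : br x x = 0.
Proof. by case: Hbr. Qed.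
Lemma JD x y : J (x + y) = J x + J y.
Proof. by case: HJ => L _ _; have := L 1 x y; rewrite !scale1r. Qed.
Lemma J0 : J 0 = 0.
Proof. by have := JD 0 0; rewrite addr0 => /dbl0. Qed.
Lemma JN x : J (- x) = - J x.
Proof. by case: HJ => L _ _; have := L (-1) x 0; rewrite addr0 J0 addr0 !scaleN1r. Qed.
Lemma JJ x : J (J x) = - x.
Proof. by case: HJ. Qed.
Lemma brJr x y : br x (J y) = J (br x y).
Proof. by rewrite Hbi. Qed.
Lemma brJl x y : br (J x) y = J (br x y).
Proof. by rewrite (brA (J x) y) -Hbi (brA y x) JN opprK. Qed.
Lemma ipD1 x y z : ip (x + y) z = ip x z + ip y z.
Proof. by case: Hip => L _ _; have := L 1 x y z; rewrite mul1r scale1r. Qed.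
Lemma ip0l z : ip 0 z = 0.
Proof. by have := ipD1 0 0 z; rewrite addr0 => /dbl0. Qed.
Lemma ipNl x z : ip (- x) z = - ip x z.
Proof. by case: Hip => L _ _; have := L (-1) x 0 z; rewrite addr0 ip0l addr0 scaleN1r mulN1r. Qed.
Lemma ipC x y : ip x y = ip y x.
Proof. by case: Hip. Qed.
Lemma ip0r z : ip z 0 = 0.
Proof. by rewrite ipC ip0l. Qed.
Lemma ipNr x z : ip z (- x) = - ip z x.
Proof. by rewrite ipC ipNl ipC. Qed.
Lemma ipJJ x y : ip (J x) (J y) = ip x y.
Proof. exact: Hh. Qed.

Lemma key x y : ce_d3 br (torsion br J ip) x (J x) y (J y) = 0 -> br x y = 0.
Proof.
rewrite /ce_d3 /torsion.
rewrite !(brJl, brJr, JJ, JN, brNl, brNr, brxx, J0, br0l, br0r).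
rewrite (brA y (br x y)).
rewrite !(JN, opprK, ipNl, ipNr, ipJJ, ip0l, ip0r, opprK).
move=> h.
have hw : ip (br x y) (br x y) = 0 by lra.
case: Hip => _ _ P; apply/eqP; apply: contraT => /P; by rewrite hw ltxx.
Qed.
End Aux.

Theorem mainTheorem15 (R : realType) (n : nat)
  (br : 'rV[R]_n -> 'rV[R]_n -> 'rV[R]_n) (J : 'rV[R]_n -> 'rV[R]_n) :
  is_lie_bracket br -> nilpotent br ->
  complex_structure br J -> bi_invariant br J ->
  (exists ip : 'rV[R]_n -> 'rV[R]_n -> R,
      [/\ inner_product ip, J_hermitian J ip & pluriclosed br J ip]) ->
  abelian br.
Proof.
move=> Hbr _ HJ Hbi [ip [Hip Hh Hpc]] x y.
have h := Hpc x (J x) y (J y).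
exact: (@key R n br J ip Hbr HJ Hbi Hip Hh x y h).
Qed.
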